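(* Let $G$ be a second-countable ample Hausdorff groupoid, let $R$ be a commutative unital ring with the discrete topology, let $T \le R^\times$, and let $(\Sigma, i, q)$ be a discrete twist by $T$ over $G$. Then $\Sigma$ is topologically trivial, i.e. there is a continuous map $P\colon G \to \Sigma$ with $q \circ P = \mathrm{id}_G$ and $P(G^{(0)}) \subseteq \Sigma^{(0)}$.
   Context: Groupoids are locally compact Hausdorff topological groupoids; $G$ is ample if it has a basis of compact open bisections (a bisection is a set contained in an open set on which $r$ and $s$ restrict to homeomorphisms onto open sets). A discrete twist by $T$ over $G$ is a sequence $G^{(0)} \times T \xrightarrow{i} \Sigma \xrightarrow{q} G$, where $T$ carries the discrete topology, $G^{(0)} \times T$ is the trivial group bundle with fibres $T$, $\Sigma$ is a Hausdorff groupoid with $\Sigma^{(0)} = i(G^{(0)} \times \{1\})$, and $i, q$ are continuous groupoid homomorphisms restricting to homeomorphisms of unit spaces, such that: (1) $i(\{x\} \times T) = q^{-1}(x)$ for all $x \in G^{(0)}$, $i$ is injective, and $q$ is a quotient map; (2) for each $\alpha \in G$ there are an open bisection $B_\alpha \ni \alpha$ of $G$ and a continuous $P_\alpha\colon B_\alpha \to \Sigma$ with $q \circ P_\alpha = \mathrm{id}_{B_\alpha}$ such that $(\beta,z) \mapsto i(r(\beta),z)P_\alpha(\beta)$ is a homeomorphism $B_\alpha \times T \to q^{-1}(B_\alpha)$; (3) $i(r(\varepsilon),z)\varepsilon = \varepsilon\, i(s(\varepsilon),z)$ for all $\varepsilon \in \Sigma$, $z \in T$. *)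

(* Defs.v *)
From mathcomp Require Import all_boot all_algebra.
From mathcomp Require Import boolp classical_sets functions cardinality topology.

Set Implicit Arguments.
Unset Strict Implicit.
Unset Printing Implicit Defensive.

Import GRing.Theory.
Local Open Scope classical_set_scope.

(* Groupoid operations on a carrier type X (the whole type is the groupoid).
   Units are elements of X: the unit space is the set of x with r x = x. *)
Record groupoid_ops (X : Type) := GroupoidOps {
  gr : X -> X;
  gs : X -> X;
  gmul : X -> X -> X;     (* product, meaningful on composable pairs *)
  ginv : X -> X
}.

Definition composable {X} (g : groupoid_ops X) (a b : X) : Prop :=
  gs g a = gr g b.

Definition gunits {X} (g : groupoid_ops X) : set X := [set x | gr g x = x].

Definition is_groupoid {X} (g : groupoid_ops X) : Prop :=
  forall a b c : X,
    (gr g (gr g a) = gr g a /\ gs g (gr g a) = gr g a /\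
     gr g (gs g a) = gs g a /\ gs g (gs g a) = gs g a) /\
    (composable g a b ->
       gr g (gmul g a b) = gr g a /\ gs g (gmul g a b) = gs g b) /\
    (composable g a b -> composable g b c ->
       gmul g (gmul g a b) c = gmul g a (gmul g b c)) /\
    (gmul g (gr g a) a = a /\ gmul g a (gs g a) = a) /\
    (gr g (ginv g a) = gs g a /\ gs g (ginv g a) = gr g a) /\
    (gmul g a (ginv g a) = gr g a /\ gmul g (ginv g a) a = gs g a).

Definition locally_compact_space (X : topologicalType) : Prop :=
  forall x : X, exists K : set X, compact K /\ nbhs x K.

Definition lch_groupoid {X : topologicalType} (g : groupoid_ops X) : Prop :=
  [/\ is_groupoid g,
      {within [set p : X * X | composable g p.1 p.2],
         continuous (fun p : X * X => gmul g p.1 p.2)},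
      continuous (ginv g),
      hausdorff_space X &
      locally_compact_space X].

Definition homeo_on {X Y : topologicalType} (A : set X) (B : set Y)
    (f : X -> Y) : Prop :=
  {within A, continuous f} /\
  exists h : Y -> X,
    [/\ {within B, continuous h},
        (forall x, A x -> B (f x) /\ h (f x) = x) &
        (forall y, B y -> A (h y) /\ f (h y) = y)].

Definition open_bisection {X : topologicalType} (g : groupoid_ops X)
    (U : set X) : Prop :=
  [/\ open U,
      open (gr g @` U), open (gs g @` U),
      homeo_on U (gr g @` U) (gr g) &
      homeo_on U (gs g @` U) (gs g)].

Definition bisection {X : topologicalType} (g : groupoid_ops X)
    (B : set X) : Prop :=
  exists U, open_bisection g U /\ B `<=` U.

Definition ample {X : topologicalType} (g : groupoid_ops X) : Prop :=
  forall (U : set X) (x : X), open U -> U x ->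
    exists B : set X, [/\ compact B, open B, bisection g B, B x & B `<=` U].

Definition quotient_map {X Y : topologicalType} (q : X -> Y) : Prop :=
  (forall y, exists x, q x = y) /\
  (forall V : set Y, open V <-> open (q @^-1` V)).

Definition ring_unit {R : comPzRingType} (x : R) : Prop :=
  exists y : R, (x * y = 1)%R.

Definition subgroup_of_units {R : comPzRingType} (T : set R) : Prop :=
  [/\ forall z, T z -> ring_unit z,
      T 1%R,
      (forall z w, T z -> T w -> T (z * w)%R) &
      (forall z, T z -> exists w, T w /\ (z * w = 1)%R)].

(* A discrete twist G^(0) x T --i--> Sigma --q--> G.
   i is a function G -> R -> Sigma, relevant on G^(0) x T; T carries the
   discrete topology (via the discrete topology on R). *)
Definition discrete_twist {G S : topologicalType} {R : comPzRingType}
    (T : set R) (gG : groupoid_ops G) (gS : groupoid_ops S)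
    (i : G -> R -> S) (q : S -> G) : Prop :=
  lch_groupoid gS /\
  gunits gS = [set i x 1%R | x in gunits gG] /\
  (forall x z w, gunits gG x -> T z -> T w ->
      composable gS (i x z) (i x w) /\
      gmul gS (i x z) (i x w) = i x (z * w)%R) /\
  {within [set p : G * discrete_topology R | gunits gG p.1 /\ T p.2],
     continuous (fun p : G * discrete_topology R => i p.1 p.2)} /\
  (forall a b, composable gS a b ->
      composable gG (q a) (q b) /\ q (gmul gS a b) = gmul gG (q a) (q b)) /\
  continuous q /\
  homeo_on (gunits gG) (gunits gS) (fun x => i x 1%R) /\
  homeo_on (gunits gS) (gunits gG) q /\
  (forall x, gunits gG x -> [set i x z | z in T] = q @^-1` [set x]) /\
  (forall x y z w, gunits gG x -> gunits gG y -> T z -> T w ->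
      i x z = i y w -> x = y /\ z = w) /\
  quotient_map q /\
  (forall alpha : G, exists (B : set G) (P : G -> S),
      [/\ open_bisection gG B, B alpha,
          {within B, continuous P},
          (forall beta, B beta -> q (P beta) = beta) &
          @homeo_on (G * discrete_topology R)%type S
            [set p | B p.1 /\ T p.2] (q @^-1` B)
            (fun p => gmul gS (i (gr gG p.1) p.2) (P p.1))]) /\
  (* (3) centrality; r(eps), s(eps) in Sigma^(0) identified with
     r(q eps), s(q eps) in G^(0) *)
  (forall (e : S) (z : R), T z ->
      gmul gS (i (gr gG (q e)) z) e = gmul gS e (i (gs gG (q e)) z)).

(* Main.v *)
Require Import Defs.
From mathcomp Require Import all_boot all_algebra.
From mathcomp Require Import boolp classical_sets functions cardinality topology.
Local Open Scope classical_set_scope.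

Theorem theorem4p10 (G S : topologicalType) (gG : groupoid_ops G)
    (gS : groupoid_ops S) (R : comPzRingType) (T : set R)
    (i : G -> R -> S) (q : S -> G) :
  lch_groupoid gG -> ample gG -> @second_countable G ->
  subgroup_of_units T ->
  discrete_twist T gG gS i q ->
  exists P : G -> S,
    [/\ continuous P,
        (forall a : G, q (P a) = a) &
        P @` gunits gG `<=` gunits gS].
Proof.
move=> lchG ampG [Bs cBs [Bopen Bbasis]] sgT tw.
have [isgG _ _ hausG _] := lchG.
case: tw => lchS [unitsS [ihom [icont [qhom [qcont [ihomeo [qhomeo [fib [iinj [qquot [triv central]]]]]]]]]]].
case: sgT => _ T1 _ _.
pose good (C : set G) (P : G -> S) := [/\ open C, closed C, {in C, continuous P},
  (forall b, C b -> q (P b) = b) & (forall b, C b -> gunits gG b -> gunits gS (P b))].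
have rr : forall b, gunits gG (gr gG b).
  by move=> b; have [[H _] _] := isgG b b b; exact: H.
have local : forall a, exists C P, good C P /\ C a.
  move=> a.
  have [B [Pa [[oB orB osB [rcB _] _] Ba PacB Pasec _]]] := triv a.
  have rc : {in B, continuous (gr gG)} by rewrite -continuous_open_subspace.
  have [ua|nua] := pselect (gunits gG a).
  - have [K [cK oK _ Ka KB]] := ampG (gr gG @` B) a orB (ex_intro2 _ (fun x => gr gG x = a) a Ba ua).
    have Ku : K `<=` gunits gG by move=> b /KB [c _ <-]; exact: rr.
    exists K, (fun b => i b 1%R); split => //; split => //.
    + exact: compact_closed hausG cK.
    + rewrite -continuous_open_subspace //; apply: continuous_subspaceW Ku _.
      by case: ihomeo.
    + move=> b Kb.
      have : (q @^-1` [set b]) (i b 1%R) by rewrite -(fib b (Ku _ Kb)); exists 1%R.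
      by [].
    + by move=> b _ ub; rewrite unitsS; exists b.
  - have nb : nbhs a (~` gunits gG).
      apply: contrapT => nn; apply: nua.
      apply/esym/hausG => A W nA nW.
      have nV : nbhs a (A `&` B `&` gr gG @^-1` W).
        apply: filterI; first apply: filterI => //.
          exact: open_nbhs_nbhs.
        exact: (rc a (mem_set Ba)) W nW.
      have : exists b, (A `&` B `&` gr gG @^-1` W) b /\ gunits gG b.
        apply: contrapT => hne; apply: nn; apply: filterS nV => b Vb ub.
        by apply: hne; exists b.
      case=> b [[[Ab _] Wb] ub]; exists b; split => //.
      by rewrite /gunits /= in ub; rewrite -ub.
    rewrite nbhsE in nb; case: nb => V [oV Va] Vsub.
    have [K [cK oK _ Ka KU]] := ampG (B `&` V) a (openI oB oV) (conj Ba Va).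
    exists K, Pa; split => //; split => //.
    + exact: compact_closed hausG cK.
    + rewrite -continuous_open_subspace //; apply: continuous_subspaceW PacB.
      by move=> b /KU [].
    + by move=> b /KU [Bb _]; exact: Pasec.
    + by move=> b /KU [_ /Vsub nb2] ub.
case/countable_injP: cBs => idx idxinj.
have fam : forall n : nat, exists CP : set G * (G -> S), good CP.1 CP.2 /\
    (forall U, Bs U -> idx U = n -> (exists C P, good C P /\ U `<=` C) -> U `<=` CP.1).
  move=> n.
  have [[U [BU [iU [C [P [gCP UC]]]]]] | nex] :=
    pselect (exists U, Bs U /\ idx U = n /\ exists C P, good C P /\ U `<=` C).
  - exists (C, P); split => // U' BU' iU' _.
    have -> : U' = U by apply: idxinj; [exact: mem_set | exact: mem_set | rewrite iU iU'].
    exact: UC.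
  - exists (set0, fun b => i b 1%R); split.
      split; [exact: open0 | exact: closed0 | by move=> b /set_mem | by [] | by []].
    by move=> U BU iU ex; exfalso; apply: nex; exists U.
have [CP CPspec] := choice fam.
pose C := fun n => (CP n).1.
pose Pn := fun n => (CP n).2.
have cover : forall a, exists n, C n a.
  move=> a; have [C' [P' [gCP C'a]]] := local a.
  have [oC' _ _ _ _] := gCP.
  have [U [BU Ua] UC'] := Bbasis a C' (open_nbhs_nbhs (conj oC' C'a)).
  exists (idx U); have [_ Hsub] := CPspec (idx U).
  apply: (Hsub U BU erefl) Ua.
  by exists C', P'.
have mex : forall a, exists n, C n a /\ forall k, C k a -> (n <= k)%N.
  move=> a.
  have ex : exists n, `[< C n a >] by have [n Hn] := cover a; exists n; exact/asboolP.
  exists (ex_minn ex); case: ex_minnP => n /asboolP Hn Hmin; split => // k Ck.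
  by apply: Hmin; exact/asboolP.
have [m mspec] := choice mex.
exists (fun a => Pn (m a) a); split.
- move=> a; pose n := m a.
  have [Ca nmin] := mspec a.
  have [oC clC cP _ _] := (CPspec n).1.
  have Ncl : forall k, (k <= n)%N -> nbhs a [set b | forall j, (j < k)%N -> ~ C j b].
    elim=> [|k IH] kn.
      by apply: filterS filterT => b _ j.
    have nk : nbhs a (~` C k).
      apply: open_nbhs_nbhs; split.
        by apply: closed_openC; have [_ ? _ _ _] := (CPspec k).1.
      by move=> Cka; have := nmin k Cka; rewrite leqNgt kn.
    apply: filterS (filterI (IH (ltnW kn)) nk) => b [H1 H2] j.
    by rewrite ltnS leq_eqVlt => /orP [/eqP -> // | /H1].
  move=> W nW.
  have hW : nbhs a ((CP n).2 @^-1` W) := cP a (mem_set Ca) W nW.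
  change (nbhs a ((fun b => Pn (m b) b) @^-1` W)).
  apply: filterS (filterI (filterI hW (open_nbhs_nbhs (conj oC Ca))) (Ncl n (leqnn n))).
  move=> b [[Wb Cb] nb].
  have mb : m b = n.
    have [Cmb mmin] := mspec b.
    apply/eqP; rewrite eqn_leq (mmin n Cb) /=.
    by rewrite leqNgt; apply/negP => lt; exact: nb _ lt Cmb.
  by rewrite /preimage /= mb.
- move=> a; have [Ca _] := mspec a.
  by have [_ _ _ H _] := (CPspec (m a)).1; exact: H.
- move=> _ [a ua <-]; have [Ca _] := mspec a.
  by have [_ _ _ _ H] := (CPspec (m a)).1; exact: H.
Qed.
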